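(* Let $A$ be a complex $r$-matrix of order $n_1\times\cdots\times n_r$ and write $N=n_1\cdots n_r$. Then: (a) $\|A\|_1=|A|_{\max}$; (b) if $p\geq q\geq 1$, then $\|A\|_p\geq\|A\|_q$; (c) if $p\geq q\geq 1$, then $N^{1/p}\|A\|_p\leq N^{1/q}\|A\|_q$; (d) $\|A\|_p\leq|A|_1$ for every $p\geq1$; (e) if $p\geq q\geq 1$, then $0\leq\|A\|_p-\|A\|_q\leq (p-q)\,|A|_1\,N\log N$.
   Context: An $r$-matrix $A$ of order $n_1\times\cdots\times n_r$ is a function on $[n_1]\times\cdots\times[n_r]$ with values $a_{i_1,\ldots,i_r}$. $|A|_{\max}=\max|a_{i_1,\ldots,i_r}|$ and $|A|_1=\sum|a_{i_1,\ldots,i_r}|$. The linear form is $L_A(\mathbf{x}^{(1)},\ldots,\mathbf{x}^{(r)})=\sum a_{i_1,\ldots,i_r}\overline{x^{(1)}_{i_1}}\cdots\overline{x^{(r)}_{i_r}}$ for $\mathbf{x}^{(k)}\in\mathbb{C}^{n_k}$, and for real $p\geq1$ the spectral $p$-norm is $\|A\|_p=\max\{|L_A(\mathbf{x}^{(1)},\ldots,\mathbf{x}^{(r)})|:|\mathbf{x}^{(1)}|_p=\cdots=|\mathbf{x}^{(r)}|_p=1\}$, where $|\cdot|_p$ is the $\ell^p$ norm. *)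

(* Defs.v *)
From HB Require Import structures.
From mathcomp Require Import all_boot all_order all_algebra.
From mathcomp Require Import complex.
From mathcomp Require Import all_classical all_reals all_analysis.
Set Implicit Arguments. Unset Strict Implicit. Unset Printing Implicit Defensive.
Import Order.TTheory GRing.Theory Num.Theory.
Local Open Scope ring_scope.
Local Open Scope classical_set_scope.

Section RMatrix.
Variable R : realType.

Definition cabs (z : R[i]) : R := Normc.normc z.

(* index set [n_1] x ... x [n_r] (0-based) *)
Definition ridx (r : nat) (n : 'I_r -> nat) := {dffun forall k : 'I_r, 'I_(n k)}.

Definition rmatrix (r : nat) (n : 'I_r -> nat) := ridx n -> R[i].

Definition rsize (r : nat) (n : 'I_r -> nat) : nat := (\prod_(k < r) n k)%N.

Definition maxabs r (n : 'I_r -> nat) (A : rmatrix n) : R :=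
  \big[Num.max/0]_(i : ridx n) cabs (A i).

Definition sumabs r (n : 'I_r -> nat) (A : rmatrix n) : R :=
  \sum_(i : ridx n) cabs (A i).

Definition lpnorm (p : R) (m : nat) (x : 'I_m -> R[i]) : R :=
  (\sum_(j < m) cabs (x j) `^ p) `^ p^-1.

Definition linform r (n : 'I_r -> nat) (A : rmatrix n)
    (x : forall k : 'I_r, 'I_(n k) -> R[i]) : R[i] :=
  \sum_(i : ridx n) A i * \prod_(k < r) conjc (x k (i k)).

(* spectral p-norm: the max (= sup, the max being attained by compactness)
   of |L_A(x)| over tuples of l^p-unit vectors *)
Definition specnorm (p : R) r (n : 'I_r -> nat) (A : rmatrix n) : R :=
  sup [set cabs (linform A x) |
       x in [set x : forall k : 'I_r, 'I_(n k) -> R[i] |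
             forall k, lpnorm p (x k) = 1]].

End RMatrix.

(* Main.v *)
Require Import Defs.
From HB Require Import structures.
From mathcomp Require Import all_boot all_order all_algebra.
From mathcomp Require Import complex.
From mathcomp Require Import all_classical all_reals all_analysis.
From mathcomp Require Import ring lra.
Import Order.TTheory GRing.Theory Num.Theory.
Local Open Scope ring_scope.
Set Implicit Arguments. Unset Strict Implicit.

Section S.
Variable R : realType.

Lemma conv2 (s t x y : R) : 1 <= s -> 0 <= t -> t <= 1 -> 0 <= x -> 0 <= y ->
  (t * x + (1 - t) * y) `^ s <= t * x `^ s + (1 - t) * y `^ s.
Proof.
move=> s1 t0 t1 x0 y0.
have := (convex_powR s1 (Itv01 t0 t1)).
move=> /(_ x y); rewrite !inE /= !in_itv /= !andbT => /(_ x0 y0).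
by rewrite !convRE.
Qed.

Lemma jensen (s : R) m (b : 'I_m.+1 -> R) : 1 <= s -> (forall j, 0 <= b j) ->
  ((\sum_j b j) / m.+1%:R) `^ s <= (\sum_j b j `^ s) / m.+1%:R.
Proof.
move=> s1; elim: m b => [|m IH] b b0.
  by rewrite !big_ord1 (_ : (0.+1)%:R = 1 :> R) // !divr1.
rewrite big_ord_recr /= [X in _ <= X / _]big_ord_recr /=.
set S := \sum_(i < m.+1) b (widen_ord _ i).
set T := \sum_(i < m.+1) b (widen_ord _ i) `^ s.
set y := b ord_max.
have IH' := IH (fun i => b (widen_ord (leqnSn _) i)) (fun j => b0 _).
rewrite -/S -/T in IH'.
have m1 : (0 < m.+1%:R :> R) by rewrite ltr0n.
have m2 : (0 < m.+2%:R :> R) by rewrite ltr0n.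
pose t : R := m.+1%:R / m.+2%:R.
have t0 : 0 <= t by rewrite /t divr_ge0 // ltW.
have t1 : t <= 1 by rewrite /t ler_pdivrMr // mul1r ler_nat.
have S0 : 0 <= S by rewrite sumr_ge0.
have e : (S + y) / m.+2%:R = t * (S / m.+1%:R) + (1 - t) * y.
  rewrite /t; rewrite -[m.+2]addn1 natrD; field.
  have m0 : (0 <= m%:R :> R) by [].
  by apply/andP; split; apply: lt0r_neq0; lra.
have Sm0 : 0 <= S / m.+1%:R by rewrite divr_ge0 // ltW.
rewrite e; apply: le_trans; first exact: (conv2 s1 t0 t1 Sm0 (b0 ord_max)).
have e2 : (T + y `^ s) / m.+2%:R = t * (T / m.+1%:R) + (1 - t) * y `^ s.
  rewrite /t; rewrite -[m.+2]addn1 natrD; field.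
  have m0 : (0 <= m%:R :> R) by [].
  by apply/andP; split; apply: lt0r_neq0; lra.
rewrite e2 lerD2r; exact: ler_wpM2l.
Qed.

Lemma jensenM (s : R) m (b : 'I_m.+1 -> R) : 1 <= s -> (forall j, 0 <= b j) ->
  (\sum_j b j) `^ s <= m.+1%:R `^ (s - 1) * \sum_j b j `^ s.
Proof.
move=> s1 b0.
have M0 : (0 < m.+1%:R :> R) by rewrite ltr0n.
have B0 : 0 <= \sum_j b j by rewrite sumr_ge0.
have -> : \sum_j b j = m.+1%:R * ((\sum_j b j) / m.+1%:R).
  by rewrite mulrC divfK // gt_eqF.
have M0' : (0 <= m.+1%:R :> R) by [].
rewrite powRM ?divr_ge0 //.
have Mn0 : m.+1%:R != 0 :> R by rewrite pnatr_eq0.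
rewrite powRB ?Mn0 ?implybT //. rewrite [_ `^ 1]powRr1 // -mulrA.
apply: ler_wpM2l; first exact: powR_ge0.
rewrite [X in _ <= X]mulrC; exact: jensen.
Qed.

Definition P (p : R) {m} (a : 'I_m -> R) := (\sum_j a j `^ p) `^ p^-1.

Lemma P_ge0 p m (a : 'I_m -> R) : 0 <= P p a.
Proof. exact: powR_ge0. Qed.

Lemma P_homog p m (a : 'I_m -> R) c : 0 < p -> 0 <= c -> (forall j, 0 <= a j) ->
  P p (fun j => c * a j) = c * P p a.
Proof.
move=> p0 c0 a0; rewrite /P.
under eq_bigr do rewrite powRM //.
rewrite -mulr_sumr powRM ?powR_ge0 ?sumr_ge0 // => [|j _]; last exact: powR_ge0.
by rewrite -powRrM mulfV ?gt_eqF // powRr1.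
Qed.

Lemma P_eq0 p m (a : 'I_m -> R) : 0 < p -> (forall j, 0 <= a j) -> P p a = 0 ->
  forall j, a j = 0.
Proof.
move=> p0 a0 /powR_eq0_eq0 /eqP; rewrite psumr_eq0 => [/allP H j|j _]; last exact: powR_ge0.
by have /(_ (mem_index_enum j)) /implyP /(_ isT) /eqP /powR_eq0_eq0 := H j.
Qed.

Lemma P_all0 p m (a : 'I_m -> R) : 0 < p -> (forall j, a j = 0) -> P p a = 0.
Proof.
move=> p0 a0; rewrite /P big1 ?powR0 ?invr_eq0 ?gt_eqF // => j _.
by rewrite a0 powR0 // gt_eqF.
Qed.

Lemma P_mono p q m (a : 'I_m -> R) : 1 <= q -> q <= p -> (forall j, 0 <= a j) ->
  P p a <= P q a.
Proof.
move=> q1 qp a0.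
have q0 : 0 < q by lra.
have p0 : 0 < p by lra.
have [c0|cn0] := eqVneq (P q a) 0.
  by rewrite c0 (P_all0 p0 (P_eq0 q0 a0 c0)).
have cp : 0 < P q a by rewrite lt0r cn0 P_ge0.
set c := P q a in cn0 cp *.
pose b j := c^-1 * a j.
have cp' : 0 <= c by exact: ltW.
have b0 j : 0 <= b j by rewrite mulr_ge0 // invr_ge0.
have ab : a = fun j => c * b j.
  by apply: funext => j; rewrite /b mulrA mulfV // mul1r.
have Pb : P q b = 1 by rewrite /b P_homog // ?invr_ge0 // mulVf.
have Sb : \sum_j b j `^ q = 1.
  move: Pb; rewrite /P => /(congr1 (fun x => x `^ q)).
  by rewrite -powRrM mulVf ?gt_eqF // powRr1 ?sumr_ge0 // ?powR1 // => j _; exact: powR_ge0.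
have b1 j : b j <= 1.
  have : b j `^ q <= 1.
    rewrite -Sb (bigD1 j) //= lerDl sumr_ge0 // => i _; exact: powR_ge0.
  apply: contraLR; rewrite -!ltNge => bj1.
  by apply: (lt_le_trans bj1); apply: le1r_powR => //; rewrite ltW.
rewrite ab P_homog // -[X in _ <= X]mulr1; apply: ler_wpM2l => //.
have pi0 : 0 <= p^-1 by rewrite invr_ge0 ltW.
rewrite /P; have -> : (1:R) = 1 `^ p^-1 by rewrite powR1.
apply: ge0_ler_powR => //.
- by rewrite nnegrE sumr_ge0 // => j _; exact: powR_ge0.
- by rewrite nnegrE.
rewrite -Sb ler_sum // => j _.
have [->|bj0] := eqVneq (b j) 0; first by rewrite !powR0 ?gt_eqF.
by apply: ger_powR => //; rewrite lt0r bj0 b0 b1.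
Qed.

Lemma P_holder p q m (a : 'I_m.+1 -> R) : 1 <= q -> q <= p -> (forall j, 0 <= a j) ->
  P q a <= m.+1%:R `^ (q^-1 - p^-1) * P p a.
Proof.
move=> q1 qp a0.
have q0 : 0 < q by lra.
have p0 : 0 < p by lra.
pose s := p / q.
have s1 : 1 <= s by rewrite /s ler_pdivlMr // mul1r.
pose b j := a j `^ q.
have b0 j : 0 <= b j by exact: powR_ge0.
have J := jensenM s1 b0.
have bs j : b j `^ s = a j `^ p.
  by rewrite /b -powRrM /s mulrC divfK // gt_eqF.
rewrite (eq_bigr _ (fun j _ => bs j)) in J.
have : ((\sum_j b j) `^ s) `^ p^-1 <= (m.+1%:R `^ (s - 1) * \sum_j a j `^ p) `^ p^-1.
  have pi0 : 0 <= p^-1 by rewrite invr_ge0 ltW.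
  rewrite ge0_ler_powR ?nnegrE ?powR_ge0 //.
  by rewrite mulr_ge0 ?powR_ge0 ?sumr_ge0 // => j _; exact: powR_ge0.
rewrite -powRrM powRM ?powR_ge0 ?sumr_ge0 // => [|j _]; last exact: powR_ge0.
rewrite -powRrM.
have -> : s * p^-1 = q^-1 by rewrite /s mulrAC mulfV ?gt_eqF // mul1r.
have -> : (s - 1) * p^-1 = q^-1 - p^-1 by rewrite /s; field; rewrite !gt_eqF.
done.
Qed.
Lemma sum_prod_dffun r (n : 'I_r -> nat) (n_pos : forall k, (0 < n k)%N)
  (G : forall k, 'I_(n k) -> R) :
  \sum_(i : ridx n) \prod_k G k (i k) = \prod_k \sum_(j < n k) G k j.
Proof.
pose J := {k : 'I_r & 'I_(n k)}.
pose Q := tagged_with (fun k => 'I_(n k)).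
have inner k : \sum_(j < n k) G k j = \sum_(u : J | Q k u) G (tag u) (tagged u).
  transitivity (\sum_(i | i == k) \sum_(j < n i) G i j); first by rewrite big_pred1_eq.
  rewrite (sig_big_dep (fun i => i == k) (fun i (j : 'I_(n i)) => true) G).
  by apply: eq_bigl => u; rewrite andbT.
under [RHS]eq_bigr do rewrite inner.
rewrite (bigA_distr_big_dep _ (fun k (u : J) => G (tag u) (tagged u))).
pose h (i : ridx n) : {ffun 'I_r -> J} := [ffun k => Tagged (fun k => 'I_(n k)) (i k)].
pose h' (f : {ffun 'I_r -> J}) : ridx n :=
  [ffun k => insubd (Ordinal (n_pos k)) (tagged (f k) : nat)].
rewrite (reindex h).
  apply: eq_big => i.
    by apply/esym/familyP => k; rewrite ffunE /= inE /=.
  by move=> _; apply: eq_bigr => k _; rewrite ffunE.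
exists h'.
  move=> i _; apply/ffunP => k; rewrite !ffunE /=.
  by apply: val_inj; rewrite /= val_insubd ltn_ord.
move=> f /familyP fQ; apply/ffunP => k; rewrite !ffunE.
move: (fQ k); rewrite inE /=.
case: (f k) => k' j /= /eqP ek; subst k'.
congr Tagged; apply: val_inj; by rewrite /= val_insubd ltn_ord.
Qed.
End S.
Section C.
Variable R : realType.

Lemma cabs_ge0 (z : R[i]) : 0 <= cabs z.
Proof. by case: z => a b; rewrite /cabs /Normc.normc sqrtr_ge0. Qed.

Lemma cabsM (a b : R[i]) : cabs (a * b) = cabs a * cabs b.
Proof. exact: Normc.normcM. Qed.

Lemma cabsJ (z : R[i]) : cabs (conjc z) = cabs z.
Proof. by case: z => a b; rewrite /cabs /Normc.normc /= sqrrN. Qed.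

Lemma cabsR (c : R) : 0 <= c -> cabs (c%:C)%C = c.
Proof.
by move=> c0; rewrite /cabs /Normc.normc /= expr0n /= addr0 sqrtr_sqr ger0_norm.
Qed.

Lemma cabs0 : cabs (0 : R[i]) = 0.
Proof. exact: Normc.normc0. Qed.

Lemma cabs_sum (I : finType) (F : I -> R[i]) :
  cabs (\sum_i F i) <= \sum_i cabs (F i).
Proof.
elim/big_rec2: _ => [|i y1 y2 _ IH]; first by rewrite cabs0.
apply: le_trans (le_normcD _ _) _; exact: lerD.
Qed.

Lemma cabs_prod (I : finType) (F : I -> R[i]) :
  cabs (\prod_i F i) = \prod_i cabs (F i).
Proof.
elim/big_rec2: _ => [|i y1 y2 _ IH]; first exact: Normc.normc1.
by rewrite cabsM IH.
Qed.


Lemma prod_powR (I : finType) (F : I -> R) t : (forall i, 0 <= F i) ->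
  (\prod_i F i) `^ t = \prod_i F i `^ t.
Proof.
move=> F0; elim: (index_enum I) => [|i s IH]; first by rewrite !big_nil powR1.
rewrite !big_cons powRM ?IH //; exact: prodr_ge0.
Qed.

Lemma prod_le1 (I : finType) (F : I -> R) : (forall i, 0 <= F i <= 1) ->
  \prod_i F i <= 1.
Proof.
move=> F1; apply: (@le_trans _ _ (\prod_(i : I) (1:R))); last by rewrite big1_eq.
by apply: ler_prod => i _; exact: F1.
Qed.

Lemma P_holder' p q m (a : 'I_m -> R) : (0 < m)%N -> 1 <= q -> q <= p ->
  (forall j, 0 <= a j) -> P q a <= m%:R `^ (q^-1 - p^-1) * P p a.
Proof. by case: m a => [//|m] a _; exact: P_holder. Qed.

Local Open Scope classical_set_scope.
Section Main.
Variables (r : nat) (n : 'I_r -> nat).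
Hypothesis n_pos : forall k, (0 < n k)%N.
Variable A : rmatrix R n.

Definition E (p : R) := [set cabs (linform A x) | x in
  [set x : forall k : 'I_r, 'I_(n k) -> R[i] | forall k, lpnorm p (x k) = 1]].

Lemma lpnormE p m (x : 'I_m -> R[i]) : lpnorm p x = P p (fun j => cabs (x j)).
Proof. by []. Qed.

Lemma coord_le p m (x : 'I_m -> R[i]) j : 0 < p -> cabs (x j) <= lpnorm p x.
Proof.
move=> p0; rewrite /lpnorm.
have pi0 : 0 <= p^-1 by rewrite invr_ge0 ltW.
have -> : cabs (x j) = (cabs (x j) `^ p) `^ p^-1.
  by rewrite -powRrM mulfV ?gt_eqF // powRr1 // cabs_ge0.
apply: ge0_ler_powR => //.
- by rewrite nnegrE powR_ge0.
- by rewrite nnegrE sumr_ge0 // => *; exact: powR_ge0.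
by rewrite (bigD1 j) //= lerDl sumr_ge0 // => *; exact: powR_ge0.
Qed.

Lemma linform_le x :
  cabs (linform A x) <= \sum_i cabs (A i) * \prod_k cabs (x k (i k)).
Proof.
apply: le_trans (cabs_sum _) _; apply: ler_sum => i _.
by rewrite cabsM cabs_prod; under eq_bigr do rewrite cabsJ.
Qed.

Lemma E_ub p x : 0 < p -> (forall k, lpnorm p (x k) = 1) ->
  cabs (linform A x) <= sumabs A.
Proof.
move=> p0 hx; apply: le_trans (linform_le x) _; rewrite /sumabs; apply: ler_sum => i _.
rewrite -[X in _ <= X]mulr1; apply: ler_wpM2l; first exact: cabs_ge0.
by apply: prod_le1 => k; rewrite cabs_ge0 -(hx k) coord_le.
Qed.

Definition delta (i : ridx n) (k : 'I_r) (j : 'I_(n k)) : R[i] :=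
  if j == i k then 1 else 0.
Arguments delta : clear implicits.

Lemma delta_norm (p : R) (i : ridx n) (k : 'I_r) : 0 < p -> lpnorm p (delta i k) = 1.
Proof.
move=> p0; rewrite /lpnorm (bigD1 (i k)) //= big1 => [|j hj]; last first.
  by rewrite /delta (negbTE hj) cabs0 powR0 // gt_eqF.
by rewrite /delta eqxx addr0 /cabs Normc.normc1 !powR1.
Qed.

Lemma linform_delta i : linform A (delta i) = A i.
Proof.
rewrite /linform (bigD1 i) //= [X in _ + X]big1 => [|i' hi'].
  by rewrite addr0 big1 ?mulr1 // => k _; rewrite /delta eqxx conjc1.
have : [exists k, i' k != i k].
  apply: contraR hi' => /existsPn H; apply/eqP/ffunP => k; apply/eqP.
  by have := H k; rewrite negbK.
case/existsP => k hk.
by rewrite (bigD1 k) //= /delta (negbTE hk) conjc0 mul0r mulr0.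
Qed.

Definition i0 : ridx n := [ffun k => Ordinal (n_pos k)].

Lemma E_ne p : 0 < p -> E p !=set0.
Proof. by move=> p0; exists (cabs (linform A (delta i0))); exists (delta i0) => // k; exact: delta_norm. Qed.

Lemma E_has_sup p : 0 < p -> has_sup (E p).
Proof.
move=> p0; split; first exact: E_ne.
by exists (sumabs A) => y [x hx <-]; exact: E_ub hx.
Qed.

Lemma E_le_spec p x : 0 < p -> (forall k, lpnorm p (x k) = 1) ->
  cabs (linform A x) <= specnorm p A.
Proof. by move=> p0 hx; apply: sup_upper_bound (E_has_sup p0) _ _; exists x. Qed.

Lemma spec_ge0 p : 0 < p -> 0 <= specnorm p A.
Proof.
move=> p0; apply: le_trans (cabs_ge0 _) (E_le_spec (x := delta i0) p0 _).
by move=> k; exact: delta_norm.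
Qed.

Lemma spec_le p c : 0 < p ->
  (forall x, (forall k, lpnorm p (x k) = 1) -> cabs (linform A x) <= c) ->
  specnorm p A <= c.
Proof. by move=> p0 H; apply: ge_sup (E_ne p0) _ => y [x hx <-]; exact: H. Qed.

Lemma linform_scale x (d : 'I_r -> R) :
  linform A (fun k j => x k j * (d k)%:C%C) = linform A x * (\prod_k d k)%:C%C.
Proof.
rewrite /linform mulr_suml; apply: eq_bigr => i _; rewrite -mulrA; congr (_ * _).
rewrite rmorph_prod -big_split /=; apply: eq_bigr => k _.
have cr (c : R) : conjc (c%:C%C) = c%:C%C.
  by apply/eqP; rewrite eq_complex /= oppr0 !eqxx.
have cm (a b : R[i]) : conjc (a * b) = conjc a * conjc b.
  case: a => a1 a2; case: b => b1 b2; apply/eqP; rewrite eq_complex /=.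
  by apply/andP; split; apply/eqP; ring.
by rewrite cm cr.
Qed.

End Main.
End C.

Section T.
Variable R : realType.
Variables (r : nat) (n : 'I_r -> nat).
Hypothesis n_pos : forall k, (0 < n k)%N.
Variable A : rmatrix R n.
Lemma scale_bound' p x : 1 <= p -> (forall k, 0 < lpnorm p (x k)) ->
  cabs (linform A x) <= (\prod_k lpnorm p (x k)) * specnorm p A.
Proof.
move=> p1 hx.
have p0 : 0 < p by lra.
pose nu k := lpnorm p (x k).
pose y k j := x k j * ((nu k)^-1)%:C%C.
have hy k : lpnorm p (y k) = 1.
  have -> : lpnorm p (y k) = P p (fun j => (nu k)^-1 * cabs (x k j)).
    rewrite lpnormE; congr P; apply: funext => j.
    rewrite /y cabsM cabsR; first exact: mulrC.
    by rewrite invr_ge0; exact: ltW (hx k).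
  rewrite P_homog; [| exact: p0 | by rewrite invr_ge0; exact: ltW (hx k) | by move=> j; exact: cabs_ge0].
  by rewrite -lpnormE mulVf //; exact: lt0r_neq0 (hx k).
have := E_le_spec n_pos A p0 hy; rewrite /y (linform_scale A) cabsM cabsR; last first.
  by apply: prodr_ge0 => k _; rewrite invr_ge0; exact: ltW (hx k).
rewrite prodfV -/nu => h.
have np : 0 < \prod_k nu k by apply: prodr_gt0 => k _; exact: hx.
have := ler_wpM2l (ltW np) h; rewrite mulrCA mulfV ?gt_eqF // mulr1.
by [].
Qed.


Lemma part_d p : 1 <= p -> specnorm p A <= sumabs A.
Proof.
move=> p1; have p0 : 0 < p by lra.
by apply: (spec_le n_pos p0) => x hx; exact: E_ub p0 hx.
Qed.

Lemma part_b p q : 1 <= q -> q <= p -> specnorm q A <= specnorm p A.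
Proof.
move=> q1 qp; have q0 : 0 < q by lra.
have p1 : 1 <= p by lra.
have p0 : 0 < p by lra.
apply: (spec_le n_pos q0) => x hx.
have pos k : 0 < lpnorm p (x k).
  rewrite lt0r P_ge0 andbT; apply/negP => /eqP h0.
  have := hx k; rewrite lpnormE (P_all0 q0).
    by move=> /esym/eqP; rewrite oner_eq0.
  exact: (P_eq0 (a := fun j => cabs (x k j)) p0 (fun j => cabs_ge0 _) h0).
apply: le_trans (scale_bound' p1 pos) _.
rewrite -[X in _ <= X]mul1r; apply: (ler_wpM2r (spec_ge0 n_pos A p0)).
apply: prod_le1 => k; apply/andP; split; first exact: P_ge0.
rewrite -(hx k); exact: (P_mono q1 qp (fun j => cabs_ge0 (x k j))).
Qed.

Lemma rsize_gt0 : (0 < rsize n)%N.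
Proof. by rewrite /rsize prodn_gt0. Qed.

Lemma part_c' p q : 1 <= q -> q <= p ->
  specnorm p A <= (rsize n)%:R `^ (q^-1 - p^-1) * specnorm q A.
Proof.
move=> q1 qp; have q0 : 0 < q by lra.
have p1 : 1 <= p by lra.
have p0 : 0 < p by lra.
apply: (spec_le n_pos p0) => x hx.
have pos k : 0 < lpnorm q (x k).
  apply: (lt_le_trans ltr01); rewrite -(hx k).
  exact: (P_mono q1 qp (fun j => cabs_ge0 (x k j))).
apply: le_trans (scale_bound' q1 pos) _.
apply: (ler_wpM2r (spec_ge0 n_pos A q0)).
rewrite /rsize natr_prod prod_powR; last by move=> k; exact: ler0n.
apply: ler_prod => k _; apply/andP; split; first exact: P_ge0.
have H := P_holder' (n_pos k) q1 qp (fun j => cabs_ge0 (x k j)).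
by rewrite -lpnormE -lpnormE (hx k) mulr1 in H.
Qed.

Lemma part_c p q : 1 <= q -> q <= p ->
  (rsize n)%:R `^ p^-1 * specnorm p A <= (rsize n)%:R `^ q^-1 * specnorm q A.
Proof.
move=> q1 qp.
have N0 : (0 < (rsize n)%:R :> R) by rewrite ltr0n rsize_gt0.
apply: le_trans (ler_wpM2l (powR_ge0 _ _) (part_c' q1 qp)) _.
rewrite mulrA -powRD; last by apply/implyP => _; exact: lt0r_neq0 N0.
by have -> : p^-1 + (q^-1 - p^-1) = q^-1 by ring.
Qed.

Lemma part_a : specnorm 1 A = maxabs A.
Proof.
apply/le_anti/andP; split.
- apply: (spec_le n_pos ltr01) => x hx.
  apply: le_trans (linform_le A x) _.
  apply: (@le_trans _ _ (\sum_(i : ridx n) maxabs A * \prod_k cabs (x k (i k)))).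
    apply: ler_sum => i _; apply: ler_wpM2r.
      by apply: prodr_ge0 => k _; exact: cabs_ge0.
    rewrite /maxabs; exact: le_bigmax.
  rewrite -mulr_sumr (sum_prod_dffun n_pos (fun k j => cabs (x k j))).
  rewrite big1 ?mulr1 // => k _.
  have := hx k; rewrite /lpnorm invr1 powRr1; last first.
    by apply: sumr_ge0 => j _; exact: powR_ge0.
  by rewrite (eq_bigr _ (fun j _ => powRr1 (cabs_ge0 (x k j)))).
- rewrite /maxabs; apply: bigmax_le; first exact: (spec_ge0 n_pos A (@ltr01 R)).
  move=> i _; rewrite -{1}(linform_delta A i).
  by apply: (E_le_spec n_pos A ltr01) => k; exact: delta_norm.
Qed.

Lemma expR_bound (s : R) : 0 <= s -> expR s - 1 <= s * expR s.
Proof.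
move=> s0; have h := expR_ge1Dx (- s); rewrite expRN in h.
have e0 : 0 < expR s by exact: expR_gt0.
have := ler_wpM2l (ltW e0) h; rewrite mulfV ?gt_eqF // => h2.
by rewrite mulrDr mulr1 mulrN in h2; lra.
Qed.

Lemma part_e p q : 1 <= q -> q <= p ->
  0 <= specnorm p A - specnorm q A /\
  specnorm p A - specnorm q A <=
    (p - q) * sumabs A * (rsize n)%:R * ln (rsize n)%:R.
Proof.
move=> q1 qp; split; first by rewrite subr_ge0; exact: part_b.
have q0 : 0 < q by lra.
have p0 : 0 < p by lra.
have sq0 : 0 <= specnorm q A by have := spec_ge0 n_pos A q0.
have sqA : specnorm q A <= sumabs A by exact: part_d.
have h1 := part_c' q1 qp.
move: sq0 sqA h1.
set N : R := (rsize n)%:R.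
set t := q^-1 - p^-1.
set sp := specnorm p A. set sq := specnorm q A. set sA := sumabs A.
move=> sq0 sqA h1.
have N1 : 1 <= N by rewrite /N ler1n rsize_gt0.
have N0 : 0 < N by lra.
have t0 : 0 <= t by rewrite /t subr_ge0 lef_pV2 // posrE.
have t1 : t <= 1.
  rewrite /t; apply: (@le_trans _ _ q^-1); first by rewrite gerBl invr_ge0 ltW.
  by rewrite invf_le1.
have tpq : t <= p - q.
  have -> : t = (p - q) / (p * q) by rewrite /t; field; rewrite !gt_eqF.
  have pq1 : 1 <= p * q by nra.
  rewrite ler_pdivrMr ?mulr_gt0 //.
  have h3 : 0 <= (p - q) * (p * q - 1) by apply: mulr_ge0; lra.
  nra.
have Nt1 : 1 <= N `^ t.
  by rewrite -[X in X <= _](powRr0 N); apply: ler_powR.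
have key : N `^ t - 1 <= (p - q) * N * ln N.
  have lN : 0 <= ln N by exact: ln_ge0.
  have eN : N `^ t = expR (t * ln N) by rewrite /powR gt_eqF.
  rewrite eN; apply: le_trans (expR_bound (mulr_ge0 t0 lN)) _.
  rewrite -eN.
  have Nt : N `^ t <= N by apply: ler1_powR.
  rewrite [X in X <= _]mulrAC.
  apply: ler_wpM2r => //.
  by apply: ler_pM => //; exact: powR_ge0.
have h2 : sp - sq <= (N `^ t - 1) * sq.
  by rewrite mulrBl mul1r lerD2r.
apply: le_trans h2 _.
apply: (@le_trans _ _ ((N `^ t - 1) * sA)).
  by apply: ler_wpM2l => //; rewrite subr_ge0.
have sA0 : 0 <= sA by exact: le_trans sq0 sqA.
have -> : (p - q) * sA * N * ln N = (p - q) * N * ln N * sA by ring.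
by have := ler_wpM2r sA0 key.
Qed.
End T.

Unset Implicit Arguments.
Local Close Scope classical_set_scope.

Theorem proposition4 (R : realType) (r : nat) (n : 'I_r -> nat)
    (n_pos : forall k, (0 < n k)%N) (A : rmatrix R n) :
  let N : R := (rsize n)%:R in
  [/\ specnorm 1 A = maxabs A,
      (forall p q : R, 1 <= q -> q <= p -> specnorm q A <= specnorm p A),
      (forall p q : R, 1 <= q -> q <= p ->
          N `^ p^-1 * specnorm p A <= N `^ q^-1 * specnorm q A),
      (forall p : R, 1 <= p -> specnorm p A <= sumabs A)
    & (forall p q : R, 1 <= q -> q <= p ->
          0 <= specnorm p A - specnorm q A /\
          specnorm p A - specnorm q A <= (p - q) * sumabs A * N * ln N)].
Proof.
move=> N; split.
- by have := part_a n_pos A.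
- by move=> p q hq hqp; have := part_b n_pos A hq hqp.
- by move=> p q hq hqp; have := part_c n_pos A hq hqp.
- by move=> p hp; have := part_d n_pos A hp.
- by move=> p q hq hqp; have := part_e n_pos A hq hqp.
Qed.
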